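(* For every fixed integer $k\ge1$, as formal power series in $y$, \[ \sum_{n\ge0}q_{n,k}y^n=\frac{(2-y)y^{2k}}{(1-y-y^2)^{k+1}}+y\,\delta_{k1}, \] where $\delta$ is the Kronecker delta.
   Context: For $n\ge1$ let $\Xi_n$ be the poset on $\{x_1,\dots,x_n\}$ whose cover relations are exactly: $x_2\prec x_1$, $x_3\prec x_2$, and for $3\le i\le n-1$, $x_i\prec x_{i+1}$ if $i$ is odd and $x_{i+1}\prec x_i$ if $i$ is even (so $x_1>x_2>x_3<x_4>x_5<\cdots$). A filter of a poset is an up-closed subset. The matchable Lucas cube $\Omega_n$ is the graph whose vertices are the filters of $\Xi_n$, two filters adjacent iff one is obtained from the other by deleting a single element; $\Omega_0$ is the one-vertex graph. $q_{n,k}$ denotes the number of induced subgraphs of $\Omega_n$ isomorphic to the $k$-dimensional hypercube ($0$ if there are none). *)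

(* Defs.v *)
From mathcomp Require Import all_boot all_order all_algebra.
Set Implicit Arguments. Unset Strict Implicit. Unset Printing Implicit Defensive.
Import GRing.Theory.

(* Element x_{j+1} of Xi_n is represented by j : 'I_n (0-based indices).
   Xi_cover n a b  <=>  a is covered by b (a < b is a cover relation). *)
Definition Xi_cover (n : nat) : rel 'I_n := fun a b =>
  [|| (val a == 1) && (val b == 0),               (* x_2 < x_1 *)
      (val a == 2) && (val b == 1),               (* x_3 < x_2 *)
      [&& 2 <= val a, val b == (val a).+1 & ~~ odd (val a)]
        (* x_i < x_{i+1}, i = a+1 >= 3 odd *)
    | [&& 2 <= val b, val a == (val b).+1 & odd (val b)] ].
        (* x_{i+1} < x_i, i = b+1 >= 4 even *)

Definition Xi_le (n : nat) : rel 'I_n := connect (@Xi_cover n).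

Definition is_filter (n : nat) (F : {set 'I_n}) : bool :=
  [forall x, forall y, (x \in F) && Xi_le x y ==> (y \in F)].

Definition Omega_adj (n : nat) (A B : {set 'I_n}) : bool :=
  ((B \subset A) && (#|A :\: B| == 1)) || ((A \subset B) && (#|B :\: A| == 1)).

Definition cube_adj (k : nat) (u v : {ffun 'I_k -> bool}) : bool :=
  #|[set i | u i != v i]| == 1.

Definition induces_cube (n k : nat) (S : {set {set 'I_n}}) : bool :=
  [forall A in S, is_filter A] &&
  [exists f : {ffun {ffun 'I_k -> bool} -> {set 'I_n}},
     [&& injectiveb f, [set f u | u in {ffun 'I_k -> bool}] == S &
         [forall u, forall v, Omega_adj (f u) (f v) == cube_adj u v]]].

Definition q (n k : nat) : nat :=
  #|[set S : {set {set 'I_n}} | induces_cube k S]|.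

Definition qgen (k N : nat) : {poly int} :=
  \sum_(n < N.+1) (q n k)%:R *: 'X^n.

Definition Dpoly : {poly int} := 1 - 'X - 'X^2.

(* Main.v *)
Require Import Defs.
From mathcomp Require Import all_boot all_order all_algebra.
From mathcomp Require Import ring zify.
Import GRing.Theory.
Set Implicit Arguments. Unset Strict Implicit. Unset Printing Implicit Defensive.

Definition upn (a : nat) : bool := (2 <= a) && ~~ odd a.
Definition locok (a x y : nat) : bool :=
  if upn a then (x != 0) ==> (y == 1) else (y != 0) ==> (x == 1).
Definition LVs (w : seq nat) : bool :=
  all (fun a => locok a (nth 0 w a) (nth 0 w a.+1)) (iota 0 (size w).-1).
Definition count2 (w : seq nat) : nat := count (pred1 2) w.
Fixpoint allw (n : nat) : seq (seq nat) :=
  if n is n'.+1 then flatten [seq [:: rcons w 0; rcons w 1; rcons w 2] | w <- allw n']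
  else [:: [::]].
Definition cnt (n k : nat) : nat := count (fun w => LVs w && (count2 w == k)) (allw n).

Lemma count_ext (P : pred (seq nat)) n :
  count P (allw n.+1) = count (fun w => P (rcons w 0)) (allw n)
    + count (fun w => P (rcons w 1)) (allw n) + count (fun w => P (rcons w 2)) (allw n).
Proof.
rewrite /=; elim: (allw n) => [|w l IH] //=.
rewrite IH; lia.
Qed.

Lemma size_allw n w : w \in allw n -> size w = n.
Proof.
elim: n w => [|n IH] w /=; first by rewrite inE => /eqP ->.
move/flattenP => [l /mapP [v hv ->]].
by rewrite !inE => /or3P [] /eqP ->; rewrite size_rcons IH.
Qed.

Lemma LVs_rcons w x : LVs (rcons w x) =
  LVs w && ((size w == 0) || locok (size w).-1 (last 0 w) x).
Proof.
rewrite /LVs size_rcons /=.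
case: (lastP w) => [|v y] //=.
rewrite !size_rcons.
have -> : ((size v).+1).-1 = size v by [].
have -> : iota 0 (size v).+1 = rcons (iota 0 (size v)) (size v).
  by rewrite -cats1 -addn1 iotaD.
rewrite all_rcons andbC.
rewrite last_rcons !nth_rcons !size_rcons ltnn ltnSn eqxx.
rewrite ltnn eqxx.
congr (_ && _).
apply: eq_in_all => a; rewrite mem_iota add0n => /andP [_ ha].
by rewrite !nth_rcons !size_rcons ha (ltn_trans ha (ltnSn _)) ltnS ha.
Qed.

Lemma count2_rcons w x : count2 (rcons w x) = (count2 w + (x == 2))%N.
Proof. by rewrite /count2 -cats1 count_cat /= addn0 eq_sym. Qed.

Definition B (n k s : nat) : nat :=
  count (fun w => LVs (rcons w s) && (count2 (rcons w s) == k)) (allw n).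

Lemma cnt_B n k : cnt n.+1 k = (B n k 0 + B n k 1 + B n k 2)%N.
Proof. by rewrite /cnt count_ext. Qed.

Lemma B_rec n k s : B n.+1 k s =
  (locok n 0 s * (if s == 2 then (if k is k'.+1 then B n k' 0 else 0) else B n k 0)
 + locok n 1 s * (if s == 2 then (if k is k'.+1 then B n k' 1 else 0) else B n k 1)
 + locok n 2 s * (if s == 2 then (if k is k'.+1 then B n k' 2 else 0) else B n k 2))%N.
Proof.
rewrite /B count_ext.
have H : forall s', count (fun w => LVs (rcons (rcons w s') s) && (count2 (rcons (rcons w s') s) == k)) (allw n)
  = (locok n s' s * (if s == 2 then (if k is k'.+1 then B n k' s' else 0) else B n k s'))%N.
  move=> s'.
  rewrite (@eq_in_count _ _ (fun w => locok n s' s && (LVs (rcons w s') && ((count2 (rcons w s') + (s == 2))%N == k)))); last first.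
    move=> w hw; rewrite LVs_rcons count2_rcons last_rcons size_rcons /= (size_allw hw).
    by case: (LVs _); case: (locok _ _ _).
  case: (locok n s' s) => /=; last by rewrite count_pred0.
  rewrite mul1n; case: (eqVneq s 2) => [_|hs].
    case: k => [|k] /=.
      by rewrite (@eq_count _ _ pred0) ?count_pred0 // => w; rewrite addn1 andbF.
    by apply: eq_count => w; rewrite addn1.
  by apply: eq_count => w; rewrite addn0.
by rewrite !H.
Qed.

Definition R (n k : nat) : nat := if upn n then B n k 0 else B n k 1.

Lemma T_step n k : cnt n.+2 k = (cnt n.+1 k + R n k + (if k is k'.+1 then R n k' else 0))%N.
Proof.
rewrite cnt_B !B_rec cnt_B /R /locok.
case: (upn n) => /=; case: k => [|k] /=; lia.
Qed.

Lemma R_step n k : (1 <= n)%N -> R n.+1 k = cnt n.+1 k.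
Proof.
move=> hn; rewrite /R B_rec B_rec cnt_B /locok /upn /=.
case: n hn => [|[|n]] // _; first by (rewrite /=; lia).
rewrite /=; case: (odd n) => /=; lia.
Qed.

Lemma cnt_rec m k : cnt m.+4 k =
  (cnt m.+3 k + cnt m.+2 k + (if k is k'.+1 then cnt m.+2 k' else 0))%N.
Proof.
by rewrite T_step; case: k => [|k]; rewrite !R_step.
Qed.

Lemma cnt0 k : cnt 0 k = (k == 0%N).
Proof. by rewrite /cnt /= /LVs /count2 /=; case: k. Qed.
Lemma cnt1 k : cnt 1 k = match k with 0 => 2 | 1 => 1 | _ => 0 end%N.
Proof. by rewrite /cnt /= /LVs /count2 /=; case: k => [|[|k]]. Qed.
Lemma cnt2 k : cnt 2 k = match k with 0 => 3 | 1 => 2 | _ => 0 end%N.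
Proof. by rewrite /cnt /= /LVs /count2 /=; case: k => [|[|k]]. Qed.
Lemma cnt3 k : cnt 3 k = match k with 0 => 4 | 1 => 3 | _ => 0 end%N.
Proof. by rewrite /cnt /= /LVs /count2 /=; case: k => [|[|[|[|k]]]]. Qed.

Section Cube.
Variables (n k : nat).
Local Notation U := {ffun 'I_k -> bool}.
Local Notation St := {set 'I_n}.

Definition tog (A : St) (x : 'I_n) : St := [set y | (y \in A) (+) (y == x)].

Lemma in_tog A x y : (y \in tog A x) = (y \in A) (+) (y == x).
Proof. by rewrite inE. Qed.

Lemma togK A x : tog (tog A x) x = A.
Proof. by apply/setP => y; rewrite !in_tog -addbA addbb addbF. Qed.

Lemma tog_neq A x : tog A x != A.
Proof. by apply/eqP => /setP /(_ x); rewrite in_tog eqxx addbT; case: (x \in A). Qed.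

Lemma tog_inj A x y : tog A x = tog A y -> x = y.
Proof.
move/setP => /(_ x); rewrite !in_tog eqxx.
by case: (x \in A) => /=; case: eqP => // ->.
Qed.

Lemma tog_sq F a b c d : tog (tog F a) c = tog (tog F b) d -> a != b -> a != c -> c = b.
Proof.
move=> /setP h hab hac.
have hy : forall y, ((y == a) (+) (y == c)) = ((y == b) (+) (y == d)).
  by move=> y; move: (h y); rewrite !in_tog -!addbA => /addbI.
apply/eqP; apply: contraT => hcb.
have hb := hy b; rewrite eqxx [b == a]eq_sym (negbTE hab) [b == c]eq_sym (negbTE hcb) /= in hb.
have hbd : b = d by move: hb; case: eqP.
subst d.
by move: (hy a); rewrite eqxx (negbTE hab) (negbTE hac) addbb.
Qed.

Lemma adj_tog A B : Omega_adj A B -> exists x, B = tog A x.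
Proof.
case/orP => /andP [hs /cards1P [x hx]].
- exists x; apply/setP => y; rewrite in_tog.
  have hxA : x \in A :\: B by rewrite hx set11.
  move: hxA; rewrite inE => /andP [hxB hxA].
  case: (eqVneq y x) => [->|hyx]; first by rewrite hxA (negbTE hxB).
  rewrite addbF.
  apply/idP/idP => [/(subsetP hs) //|hyA].
  apply: contraT => hyB.
  have : y \in A :\: B by rewrite inE hyB hyA.
  by rewrite hx inE (negbTE hyx).
- exists x; apply/setP => y; rewrite in_tog.
  have hxA : x \in B :\: A by rewrite hx set11.
  move: hxA; rewrite inE => /andP [hxB hxA].
  case: (eqVneq y x) => [->|hyx]; first by rewrite hxA (negbTE hxB).
  rewrite addbF.
  apply/idP/idP => [hyB|/(subsetP hs) //].
  apply: contraT => hyA.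
  have : y \in B :\: A by rewrite inE hyB hyA.
  by rewrite hx inE (negbTE hyx).
Qed.

Definition flip (u : U) (i : 'I_k) : U := [ffun j => if j == i then ~~ u j else u j].

Lemma flipE u i j : flip u i j = (u j) (+) (j == i).
Proof. by rewrite ffunE; case: eqP => _; rewrite ?addbT ?addbF. Qed.

Lemma flipK u i : flip (flip u i) i = u.
Proof. by apply/ffunP => j; rewrite !flipE -addbA addbb addbF. Qed.

Lemma flipC u i j : flip (flip u i) j = flip (flip u j) i.
Proof. by apply/ffunP => l; rewrite !flipE -!addbA [(_ == j) (+) _]addbC. Qed.

Lemma cube_adj_flip u i : cube_adj u (flip u i).
Proof.
apply/cards1P; exists i; apply/setP => j; rewrite !inE flipE.
by case: (u j); case: (j == i).
Qed.

Lemma cube_adj_ex u v : cube_adj u v -> exists i, v = flip u i.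
Proof.
move/cards1P => [i hi]; exists i; apply/ffunP => j; rewrite flipE.
move/setP: hi => /(_ j); rewrite !inE.
by case: (u j); case: (v j); case: (j == i).
Qed.

Definition wt (u : U) := #|[set j | u j]|.
Definition u0 : U := [ffun => false].

Lemma wt0 (u : U) : wt u = 0 -> u = u0.
Proof.
move/eqP; rewrite cards_eq0 => /eqP /setP h; apply/ffunP => j.
by move: (h j); rewrite !inE ffunE.
Qed.

Lemma wt_flip (u : U) (j : 'I_k) : u j -> wt (flip u j) = (wt u).-1.
Proof.
move=> hj; rewrite /wt (cardsD1 j [set j0 | u j0]) inE hj /= add0n.
apply: eq_card => l; rewrite !inE flipE.
by case: (eqVneq l j) => [->|hlj]; rewrite ?hj ?addbF /=; case: (u l).
Qed.

Lemma wt_pos (u : U) : 0 < wt u -> exists j, u j.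
Proof. by rewrite /wt card_gt0 => /set0Pn [j]; rewrite inE; exists j. Qed.

Variable f : {ffun U -> St}.
Hypothesis finj : injective f.
Hypothesis fadj : forall u v, Omega_adj (f u) (f v) = cube_adj u v.

Lemma adj_flip u i : exists x, f (flip u i) = tog (f u) x.
Proof. by apply: adj_tog; rewrite fadj cube_adj_flip. Qed.

Lemma flip_neq u i : flip u i != u.
Proof. by apply/eqP => /ffunP /(_ i); rewrite flipE eqxx addbT; case: (u i). Qed.

Lemma cube_struct : exists phi : 'I_k -> 'I_n,
  forall u i, f (flip u i) = tog (f u) (phi i).
Proof.
have [phi hphi] := fin_all_exists (fun i => adj_flip u0 i).
exists phi.
suff H : forall m u, wt u = m -> forall i, ~~ u i -> f (flip u i) = tog (f u) (phi i).
  move=> u i; case hui: (u i); last by apply: (H _ u erefl); rewrite hui.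
  have h1 : ~~ (flip u i) i by rewrite flipE hui eqxx.
  have := H _ _ erefl i h1; rewrite flipK => ->.
  by rewrite togK.
elim=> [|m IH] u hw i hui.
  by rewrite (wt0 hw); apply: hphi.
have [j hj] : exists j, u j by apply: wt_pos; rewrite hw.
set w := flip u j.
have hwm : wt w = m by rewrite /w wt_flip // hw.
have hwj : ~~ w j by rewrite /w flipE hj eqxx.
have hij : i != j by apply: contraNneq hui => ->.
have hwi : ~~ w i by rewrite /w flipE (negbTE hij) addbF.
have hu : u = flip w j by rewrite /w flipK.
have e1 : f u = tog (f w) (phi j) by rewrite hu; apply: IH.
have e2 : f (flip w i) = tog (f w) (phi i) by apply: IH.
have [c hc] := adj_flip u i.
have [d hd] : exists d, f (flip u i) = tog (f (flip w i)) d.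
  by rewrite hu flipC; apply: adj_flip.
rewrite hc; congr tog.
move: hd; rewrite hc e1 e2 => hd.
apply: (tog_sq hd).
  apply/eqP => hji; move: (e1); rewrite hji -e2 => /finj.
  by move/ffunP/(_ i); rewrite flipE eqxx addbT /w flipE (negbTE hij) addbF; case: (u i).
apply/eqP => hjc; move: hc; rewrite e1 -hjc togK => /finj.
by rewrite /w => /ffunP /(_ i); rewrite !flipE eqxx (negbTE hij) addbT addbF; case: (u i).
Qed.


Variable phi : 'I_k -> 'I_n.
Hypothesis hphi : forall u i, f (flip u i) = tog (f u) (phi i).

Lemma phi_inj : injective phi.
Proof.
move=> i j e; apply/eqP; apply: contraT => hij.
have := hphi (flip u0 i) j; rewrite (hphi u0 i) -e togK => /finj /ffunP /(_ j).
by rewrite !flipE ffunE eqxx eq_sym (negbTE hij).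
Qed.

Lemma mem_fu : forall u y, (y \in f u) = (y \in f u0) (+) [exists j, u j && (phi j == y)].
Proof.
suff H : forall m u, wt u = m -> forall y, (y \in f u) = (y \in f u0) (+) [exists j, u j && (phi j == y)].
  by move=> u; apply: (H _ u erefl).
elim=> [|m IH] u hw y.
  rewrite (wt0 hw); suff -> : [exists j, u0 j && (phi j == y)] = false by rewrite addbF.
  by apply/negbTE; apply/existsP => [[j]]; rewrite ffunE.
have [j hj] : exists j, u j by apply: wt_pos; rewrite hw.
set w := flip u j.
have hwm : wt w = m by rewrite /w wt_flip // hw.
have hu : u = flip w j by rewrite /w flipK.
rewrite hu hphi in_tog (IH _ hwm) -addbA; congr addb.
case: (eqVneq y (phi j)) => [->|hy].
  rewrite addbT.
  have -> : [exists j0, flip w j j0 && (phi j0 == phi j)].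
    by apply/existsP; exists j; rewrite flipE /w flipE hj eqxx /= eqxx.
  apply/negP => /existsP [l /andP [hl /eqP /phi_inj hlj]].
  by move: hl; rewrite hlj /w flipE hj eqxx.
rewrite addbF; apply: eq_existsb => l.
case: (eqVneq l j) => [->|hl]; last by rewrite flipE (negbTE hl) addbF.
by rewrite flipE eqxx addbT; case: (eqVneq (phi j) y) => [e|_]; [move: hy; rewrite e eqxx|rewrite !andbF].
Qed.

End Cube.

Lemma cover_nat n (i j : 'I_n) : Xi_cover i j =
  ((val j == (val i).+1) && upn i) || ((val i == (val j).+1) && ~~ upn j).
Proof.
rewrite /Xi_cover /upn; case: i j => [a ha] [b hb] /=.
apply/idP/idP.
- case/or4P.
  + by case/andP => /eqP -> /eqP ->.
  + by case/andP => /eqP -> /eqP ->.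
  + by case/and3P => h1 -> h3; rewrite h1 h3.
  + by case/and3P => h1 -> h3; rewrite h1 h3 orbT.
- case/orP => /andP [/eqP -> h].
  + by case/andP: h => h1 h2; rewrite h1 eqxx h2 /= !orbT.
  + case: b h {hb ha} => [|[|b]] //= h.
    by rewrite negbK in h; rewrite h eqxx /= !orbT.
Qed.

Lemma filterP n (F : {set 'I_n}) : is_filter F =
  [forall i, forall j, Xi_cover i j ==> (i \in F) ==> (j \in F)].
Proof.
apply/idP/idP.
- move/forallP => h; apply/forallP => i; apply/forallP => j.
  apply/implyP => hc; apply/implyP => hi.
  move/forallP: (h i) => /(_ j) /implyP; apply.
  by rewrite hi /Xi_le; apply: connect1.
- move/forallP => h; apply/forallP => i; apply/forallP => j.
  apply/implyP => /andP [hi /connectP [p hp ->]].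
  elim: p i hi hp => [|x p IH] i hi //= /andP [hix hp].
  apply: IH hp.
  by move/forallP: (h i) => /(_ x) /implyP /(_ hix) /implyP; apply.
Qed.

Section Words.
Variable n : nat.
Local Notation St := {set 'I_n}.

Definition Bw (w : seq nat) : St := [set i : 'I_n | nth 0 w i == 1].
Definition Xw (w : seq nat) : St := [set i : 'I_n | nth 0 w i == 2].
Definition Sw (w : seq nat) : {set St} := [set Bw w :|: Y | Y in powerset (Xw w)].
Definition CV (w : seq nat) : bool :=
  [forall i : 'I_n, forall j : 'I_n, Xi_cover i j ==> (nth 0 w i != 0) ==> (nth 0 w j == 1)].

Lemma LVs_CV w : size w = n -> LVs w = CV w.
Proof.
move=> hs; rewrite /LVs hs; apply/allP/forallP => [h i|h a].
- apply/forallP => j; apply/implyP; rewrite cover_nat.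
  case/orP => /andP [/eqP hj hu].
  + have ha : val i \in iota 0 n.-1 by rewrite mem_iota; move: (ltn_ord j) hj => /=; lia.
    by move: (h _ ha); rewrite /locok hu hj.
  + have ha : val j \in iota 0 n.-1 by rewrite mem_iota; move: (ltn_ord i) hj => /=; lia.
    by move: (h _ ha); rewrite /locok (negbTE hu) hj.
- rewrite mem_iota add0n => /andP [_ ha].
  have hi : a < n by lia.
  have hj : a.+1 < n by lia.
  move/forallP: (h (Ordinal hi)) => /(_ (Ordinal hj)).
  move/forallP: (h (Ordinal hj)) => /(_ (Ordinal hi)).
  rewrite !cover_nat /= /locok eqxx.
  by case: (upn a) => /=; rewrite ?andbF ?andbT ?orbT ?orbF /= => h1 h2; [exact: h2 | exact: h1].
Qed.

Lemma cover_irr (i : 'I_n) : Xi_cover i i = false.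
Proof. by rewrite cover_nat; case: (val i) => [|a] /=; rewrite ?ltn_eqF // !andFb. Qed.

Lemma nth_lt3 w i : all (fun a => a < 3) w -> nth 0 w i < 3.
Proof.
move/allP => h; case: (ltnP i (size w)) => hi; first by apply: h; apply: mem_nth.
by rewrite nth_default.
Qed.

Lemma filt_CV w : all (fun a => a < 3) w ->
  (forall Y : St, Y \subset Xw w -> is_filter (Bw w :|: Y)) <-> CV w.
Proof.
move=> hw; split => [h|hc Y hY].
- apply/forallP => i; apply/forallP => j; apply/implyP => hc; apply/implyP => hi.
  have hl := nth_lt3 i hw.
  have : (nth 0 w i == 1) || (nth 0 w i == 2) by move: hi hl; case: (nth 0 w i) => [|[|[|]]].
  case/orP => hi'.
  + have := h set0 (sub0set _); rewrite setU0 filterP => /forallP /(_ i) /forallP /(_ j).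
    by rewrite hc !inE hi' /=.
  + have hY : [set i] \subset Xw w by rewrite sub1set inE.
    have := h _ hY; rewrite filterP => /forallP /(_ i) /forallP /(_ j).
    rewrite hc !inE eqxx orbT /= => /orP [//|/eqP hji].
    by move: hc; rewrite hji cover_irr.
- rewrite filterP; apply/forallP => i; apply/forallP => j; apply/implyP => hcij.
  apply/implyP => hi.
  have hi0 : nth 0 w i != 0.
    move: hi; rewrite !inE => /orP [/eqP -> //|/(subsetP hY)].
    by rewrite inE => /eqP ->.
  move/forallP: hc => /(_ i) /forallP /(_ j).
  by rewrite hcij hi0 /= !inE => ->.
Qed.

Lemma cardc (P : pred nat) : #|[set i : 'I_n | P i]| = count P (iota 0 n).
Proof.
rewrite cardsE cardE /enum_mem size_filter -enumT -val_enum_ord count_map.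
by apply: eq_count => i.
Qed.

Lemma card_Xw w : size w = n -> #|Xw w| = count2 w.
Proof.
move=> hs; rewrite /Xw (cardc (fun a => nth 0 w a == 2)) /count2.
by rewrite -{2}(mkseq_nth 0 w) /mkseq count_map hs.
Qed.

Lemma allw_spec w : (w \in allw n) = (size w == n) && all (fun a => a < 3) w.
Proof.
elim: n w => [|m IH] w /=.
  by rewrite inE; case: w.
apply/idP/idP.
- move/flattenP => [l /mapP [v hv ->]].
  move: hv; rewrite IH => /andP [/eqP hs ha].
  by rewrite !inE => /or3P [] /eqP ->; rewrite size_rcons all_rcons hs eqxx ha.
- case/lastP: w => [//|v x]; rewrite size_rcons all_rcons eqSS => /and3P [hs hx ha].
  apply/flattenP; exists [:: rcons v 0; rcons v 1; rcons v 2].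
    by apply: map_f; rewrite IH hs ha.
  by move: hx; case: x => [|[|[|x]]] // _; rewrite !inE eqxx ?orbT.
Qed.

Lemma mem_Sw w A : (A \in Sw w) = [exists Y : St, (Y \subset Xw w) && (A == Bw w :|: Y)].
Proof.
apply/imsetP/existsP => [[Y hY ->]|[Y /andP [hY /eqP ->]]].
  by exists Y; rewrite -powersetE hY eqxx.
by exists Y; rewrite // powersetE.
Qed.

Lemma BXdisj w x : x \in Bw w -> x \in Xw w -> False.
Proof. by rewrite !inE => /eqP ->. Qed.

Lemma Sw_inj w w' : w \in allw n -> w' \in allw n -> Sw w = Sw w' -> w = w'.
Proof.
rewrite !allw_spec => /andP [/eqP hs ha] /andP [/eqP hs' ha'] e.
have hB : forall w1 w2, Sw w1 = Sw w2 -> Bw w2 \subset Bw w1.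
  move=> w1 w2 e12; have : Bw w1 \in Sw w2.
    by rewrite -e12 mem_Sw; apply/existsP; exists set0; rewrite sub0set setU0 eqxx.
  by rewrite mem_Sw => /existsP [Y /andP [_ /eqP ->]]; apply: subsetUl.
have eB : Bw w = Bw w' by apply/eqP; rewrite eqEsubset !hB.
have hX : forall w1 w2, Sw w1 = Sw w2 -> Bw w1 = Bw w2 -> Xw w1 \subset Xw w2.
  move=> w1 w2 e12 eB12; have : Bw w1 :|: Xw w1 \in Sw w2.
    by rewrite -e12 mem_Sw; apply/existsP; exists (Xw w1); rewrite subxx eqxx.
  rewrite mem_Sw => /existsP [Y /andP [hY /eqP hU]].
  apply/subsetP => x hx.
  have : x \in Bw w2 :|: Y by rewrite -hU inE hx orbT.
  rewrite inE => /orP [hxB|/(subsetP hY) //].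
  by case: (BXdisj (x := x) (w := w1)); rewrite // eB12.
have eX : Xw w = Xw w' by apply/eqP; rewrite eqEsubset hX // hX.
apply: (@eq_from_nth _ 0); first by rewrite hs hs'.
move=> i; rewrite hs => hi.
move/setP: eB => /(_ (Ordinal hi)); rewrite !inE /=.
move/setP: eX => /(_ (Ordinal hi)); rewrite !inE /=.
have h1 := nth_lt3 i ha; have h2 := nth_lt3 i ha'.
move: h1 h2; case: (nth 0 w i) => [|[|[|]]] //; case: (nth 0 w' i) => [|[|[|]]] //.
Qed.

Lemma Omega_sd (A B : St) : Omega_adj A B = (#|(A :\: B) :|: (B :\: A)| == 1).
Proof.
rewrite /Omega_adj.
rewrite (cardsU (A :\: B) (B :\: A)).
have -> : (A :\: B) :&: (B :\: A) = set0.
  by apply/setP => x; rewrite !inE; case: (x \in A); case: (x \in B).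
rewrite cards0 subn0.
rewrite -!setD_eq0 -!cards_eq0.
case: #|A :\: B| => [|[|a]]; case: #|B :\: A| => [|[|b]] //=.
Qed.


Lemma Sw_cube w : w \in allw n -> CV w -> induces_cube #|Xw w| (Sw w).
Proof.
move=> hw hc; have ha : all (fun a => a < 3) w by move: hw; rewrite allw_spec => /andP [].
apply/andP; split.
  apply/forallP => A; apply/implyP; rewrite mem_Sw => /existsP [Y /andP [hY /eqP ->]].
  by apply: (proj2 (filt_CV ha)).
set X := Xw w.
pose phi : 'I_#|X| -> 'I_n := enum_val.
have phinj : injective phi by apply: enum_val_inj.
have phiX : forall j, phi j \in X by move=> j; apply: enum_valP.
have memimg : forall j (P : {set 'I_#|X|}), (phi j \in phi @: P) = (j \in P).
  move=> j P; apply/imsetP/idP => [[j' hj' /phinj ->] //|hj].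
  by exists j.
have imgX : forall y (P : {set 'I_#|X|}), y \in phi @: P -> y \in X.
  by move=> y P /imsetP [j _ ->].
pose F := [ffun u : {ffun 'I_#|X| -> bool} => Bw w :|: phi @: [set j | u j]].
have memF_phi : forall u j, (phi j \in F u) = u j.
  move=> u j; rewrite ffunE in_setU memimg.
  case hB: (phi j \in Bw w); first by case: (BXdisj hB (phiX j)).
  by rewrite inE.
have memF_nX : forall u y, y \notin X -> (y \in F u) = (y \in Bw w).
  move=> u y hy; rewrite ffunE in_setU; case: (y \in Bw w) => //=.
  by apply/negP => /imgX; apply/negP.
have hrk : forall y, y \in X -> exists j, y = phi j.
  by move=> y hy; exists (enum_rank_in hy y); rewrite /phi enum_rankK_in.
apply/existsP; exists F; apply/and3P; split.
- apply/injectiveP => u v e; apply/ffunP => j.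
  by rewrite -!memF_phi e.
- apply/eqP/setP => A; apply/imsetP/idP.
  + move=> [u _ ->]; rewrite mem_Sw; apply/existsP; exists (phi @: [set j | u j]).
    rewrite ffunE eqxx andbT; apply/subsetP => y; exact: imgX.
  + rewrite mem_Sw => /existsP [Y /andP [hY /eqP ->]].
    exists [ffun j => phi j \in Y] => //.
    rewrite ffunE; congr (_ :|: _); apply/setP => y.
    apply/idP/imsetP => [hy|[j]]; last by rewrite inE ffunE => hj ->.
    have [j ej] := hrk y (subsetP hY y hy).
    by exists j; rewrite // inE ffunE -ej.
- apply/forallP => u; apply/forallP => v; rewrite Omega_sd /cube_adj.
  have -> : (F u :\: F v) :|: (F v :\: F u) = phi @: [set j | u j != v j].
    apply/setP => y; case hy: (y \in X).
      have [j ->] := hrk y hy.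
      rewrite memimg !inE !memF_phi.
      by case: (u j); case: (v j).
    rewrite !inE !memF_nX ?hy //.
    rewrite andNb orbF; apply/esym/negbTE; apply/negP => /imgX.
    by rewrite hy.
  by rewrite card_imset.
Qed.

Definition memn (A : St) (a : nat) : bool := [exists i : 'I_n, (val i == a) && (i \in A)].

Lemma memnE (A : St) (i : 'I_n) : memn A i = (i \in A).
Proof.
apply/existsP/idP => [[i' /andP [/eqP /val_inj -> //]]|hi].
by exists i; rewrite eqxx.
Qed.

Lemma cube_Sw k S : induces_cube k S ->
  exists w, [/\ w \in allw n, CV w, #|Xw w| = k & S = Sw w].
Proof.
case/andP => hfil /existsP [f /and3P [/injectiveP finj /eqP himg /forallP hadj]].
have fadj : forall u v, Omega_adj (f u) (f v) = cube_adj u v.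
  by move=> u v; move/forallP: (hadj u) => /(_ v) /eqP.
have [phi hphi] := cube_struct finj fadj.
have phinj := phi_inj finj hphi.
have hmem := mem_fu finj hphi.
set X : St := [set phi j | j in 'I_k].
set B : St := f (u0 k) :\: X.
have Ephi : forall u j, [exists j0, u j0 && (phi j0 == phi j)] = u j.
  move=> u j; apply/existsP/idP => [[j0 /andP [hj0 /eqP /phinj <-]] //|hj].
  by exists j; rewrite hj eqxx.
have EnX : forall (u : {ffun 'I_k -> bool}) y, y \notin X -> [exists j0, u j0 && (phi j0 == y)] = false.
  move=> u y hy; apply/negbTE/negP => /existsP [j0 /andP [_ /eqP hj0]].
  by move: hy; rewrite -hj0 imset_f.
pose w := mkseq (fun a => if memn X a then 2 else if memn B a then 1 else 0) n.
have nthw : forall i : 'I_n, nth 0 w i = if i \in X then 2 else if i \in B then 1 else 0.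
  by move=> i; rewrite nth_mkseq // !memnE.
have eB : Bw w = B.
  apply/setP => i; rewrite inE nthw.
  case hX: (i \in X); last by case: (i \in B).
  by rewrite /B inE hX.
have eX : Xw w = X.
  apply/setP => i; rewrite inE nthw.
  by case hX: (i \in X) => //; case: (i \in B).
have hw : w \in allw n.
  rewrite allw_spec size_mkseq eqxx /=.
  by apply/allP => a /mapP [b _ ->]; case: (memn X b) => //; case: (memn B b).
have hfu : forall u, f u = B :|: (f u :&: X).
  move=> u; apply/setP => y; rewrite !inE.
  case hy: (y \in X); rewrite ?orbT ?andbT ?andbF ?orbF //=.
  by rewrite hmem EnX ?hy // addbF.
have eS : S = Sw w.
  rewrite -himg; apply/setP => A; rewrite mem_Sw eB eX.
  apply/imsetP/existsP.
  - move=> [u _ ->]; exists (f u :&: X); rewrite subsetIr /=.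
    by rewrite {1}hfu.
  - move=> [Y /andP [hY /eqP ->]].
    exists [ffun j => (phi j \in Y) (+) (phi j \in f (u0 k))] => //.
    apply/setP => y; rewrite hmem !inE.
    case hy: (y \in X).
      move/imsetP: hy => [j _ ->].
      by rewrite Ephi ffunE /= addbC -addbA addbb addbF.
    rewrite EnX ?hy // addbF /=.
    case hyY: (y \in Y); last by rewrite orbF.
    by move: hy; rewrite (subsetP hY y hyY).
exists w; split => //.
- have ha : all (fun a => a < 3) w by move: hw; rewrite allw_spec => /andP [].
  apply: (proj1 (filt_CV ha)) => Y hY.
  have : Bw w :|: Y \in S by rewrite eS mem_Sw; apply/existsP; exists Y; rewrite hY eqxx.
  by move/forallP: hfil => /(_ (Bw w :|: Y)) /implyP; apply.
- by rewrite eX card_imset // card_ord.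
Qed.

End Words.

Lemma uniq_allw n : uniq (allw n).
Proof.
elim: n => [//|n IH] /=.
have -> : flatten [seq [:: rcons w 0; rcons w 1; rcons w 2] | w <- allw n]
  = [seq rcons w x | w <- allw n, x <- [:: 0; 1; 2]] by [].
apply: allpairs_uniq => //.
by move=> [a b] [c d] _ _ /= /rcons_inj [-> ->].
Qed.

Lemma q_cnt n k : q n k = cnt n k.
Proof.
set L := [seq Sw n w | w <- [seq w <- allw n | LVs w && (count2 w == k)]].
have hL : uniq L.
  rewrite map_inj_in_uniq ?filter_uniq ?uniq_allw //.
  move=> w w' hw hw'; rewrite !mem_filter in hw hw'.
  case/andP: hw => _ hw; case/andP: hw' => _ hw'.
  exact: Sw_inj.
have eS : [set S | induces_cube k S] = [set S in L].
  apply/setP => S; rewrite !inE; apply/idP/idP.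
  - move/cube_Sw => [w [hw hc hk ->]].
    apply: map_f; rewrite mem_filter hw andbT.
    have hs : size w = n by move: hw; rewrite allw_spec => /andP [/eqP].
    by rewrite (LVs_CV hs) hc -(card_Xw hs) hk eqxx.
  - move/mapP => [w]; rewrite mem_filter => /andP [/andP [hl /eqP hk] hw] ->.
    have hs : size w = n by move: hw; rewrite allw_spec => /andP [/eqP].
    rewrite -hk -(card_Xw hs); apply: Sw_cube => //.
    by rewrite -(LVs_CV hs).
rewrite /q eS cardsE (card_uniqP hL) size_map size_filter.
by [].
Qed.

Unset Implicit Arguments.
Local Open Scope ring_scope.

Definition eqN (N : nat) (p r : {poly int}) := forall i, (i <= N)%N -> p`_i = r`_i.

Lemma eqN_trans N p r s : eqN N p r -> eqN N r s -> eqN N p s.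
Proof. by move=> h1 h2 i hi; rewrite h1 // h2. Qed.

Lemma eqN_mull N p r s : eqN N p r -> eqN N (s * p) (s * r).
Proof.
move=> h i hi; rewrite !coefM; apply: eq_bigr => j _; rewrite h //.
by apply: leq_trans hi; rewrite leq_subr.
Qed.

Lemma eqN_mulr N p r s : eqN N p r -> eqN N (p * s) (r * s).
Proof. by move=> h; rewrite ![_ * s]mulrC; apply: eqN_mull. Qed.

Lemma eqN_add N p r s : eqN N p r -> eqN N (p + s) (r + s).
Proof. by move=> h i hi; rewrite !coefD h. Qed.

Lemma coef_qgen k N i : (qgen k N)`_i = if (i <= N)%N then (q i k)%:R else 0.
Proof. by rewrite /qgen -(poly_def _ (fun n => (q n k)%:R)) coef_poly ltnS. Qed.

Lemma coef_mulD (p : {poly int}) i :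
  (p * Dpoly)`_i = p`_i - (if i == 0%N then 0 else p`_i.-1)
                   - (if (i < 2)%N then 0 else p`_(i - 2)).
Proof.
rewrite /Dpoly mulrBr mulrBr mulr1 !coefB.
by rewrite [p * 'X]mulrC [p * 'X^2]mulrC coefXM coefXnM.
Qed.

Lemma coef_qD k N i : (i <= N)%N ->
  (qgen k N * Dpoly)`_i = (q i k)%:R - (if i == 0%N then 0 else (q i.-1 k)%:R)
                   - (if (i < 2)%N then 0 else (q (i - 2) k)%:R).
Proof.
move=> hi; rewrite coef_mulD !coef_qgen hi.
have h1 : (i.-1 <= N)%N by lia.
have h2 : (i - 2 <= N)%N by lia.
by rewrite h1 h2.
Qed.

Section Alg.
Hypothesis Hq0 : forall k, q 0 k = (k == 0%N).
Hypothesis Hq1 : forall k, q 1 k = match k with 0 => 2 | 1 => 1 | _ => 0 end%N.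
Hypothesis Hq2 : forall k, q 2 k = match k with 0 => 3 | 1 => 2 | _ => 0 end%N.
Hypothesis Hq3 : forall k, q 3 k = match k with 0 => 4 | 1 => 3 | _ => 0 end%N.
Hypothesis Hrec : forall n k, q n.+4 k =
  (q n.+3 k + q n.+2 k + (if k is k'.+1 then q n.+2 k' else 0))%N.

Lemma G0 N : eqN N (qgen 0 N * Dpoly) (1 + 'X - 'X^3).
Proof.
move=> i hi; rewrite coef_qD // !coefD coefN coef1 coefX coefXn.
case: i hi => [|[|[|[|m]]]] hi /=; rewrite ?Hq0 ?Hq1 ?Hq2 ?Hq3 //.
rewrite Hrec !subSS subn0 /= !natrD.
by rewrite addr0; ring.
Qed.

Lemma G1 N : eqN N (qgen 1 N * Dpoly) ('X - 2%:R * 'X^3 + 'X^2 * qgen 0 N).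
Proof.
move=> i hi; rewrite coef_qD // !coefD coefN coefX coefXnM coef_qgen.
rewrite mulr_natl coefMn coefXn.
rewrite (_ : (i - 2 <= N)%N = true); last by lia.
case: i hi => [|[|[|[|m]]]] hi /=; rewrite ?Hq0 ?Hq1 ?Hq2 ?Hq3 //.
rewrite Hrec !subSS subn0 /= !natrD.
by rewrite addr0; ring.
Qed.

Lemma G2 N : eqN N (qgen 2 N * Dpoly) ('X^2 * qgen 1 N - 'X^3).
Proof.
move=> i hi; rewrite coef_qD // !coefD coefN coefXn coefXnM coef_qgen.
rewrite (_ : (i - 2 <= N)%N = true); last by lia.
case: i hi => [|[|[|[|m]]]] hi /=; rewrite ?Hq0 ?Hq1 ?Hq2 ?Hq3 //.
rewrite Hrec !subSS subn0 /= !natrD.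
by ring.
Qed.

Lemma G3 N k : (3 <= k)%N -> eqN N (qgen k N * Dpoly) ('X^2 * qgen k.-1 N).
Proof.
case: k => [|[|[|k]]] // _.
move=> i hi; rewrite coef_qD // coefXnM coef_qgen.
rewrite (_ : (i - 2 <= N)%N = true); last by lia.
case: i hi => [|[|[|[|m]]]] hi /=; rewrite ?Hq0 ?Hq1 ?Hq2 ?Hq3 //.
rewrite Hrec !subSS subn0 /= !natrD.
by ring.
Qed.

Lemma eqN_addl N p r s : eqN N p r -> eqN N (s + p) (s + r).
Proof. by move=> h i hi; rewrite !coefD h. Qed.

Lemma eqN_eq N p r : p = r -> eqN N p r.
Proof. by move=> ->. Qed.

Lemma mainAlg k N : (1 <= k)%N -> eqN N (qgen k N * Dpoly ^+ k.+1)
  ((2%:P - 'X) * 'X^(2 * k) + (k == 1%N)%:R *: ('X * Dpoly ^+ k.+1)).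
Proof.
elim: k => [//|k IH] _.
case: k IH => [|[|k]] IH.
-
  apply: (@eqN_trans N _ (('X - 2%:R * 'X^3 + 'X^2 * qgen 0 N) * Dpoly) _).
    by rewrite expr2 mulrA; apply: eqN_mulr; apply: G1.
  apply: (@eqN_trans N _ (('X - 2%:R * 'X^3) * Dpoly + 'X^2 * (1 + 'X - 'X^3)) _).
    rewrite mulrDl -mulrA; apply: eqN_addl; apply: eqN_mull; apply: G0.
  by apply: eqN_eq; rewrite /Dpoly scale1r; ring.
-
  have IH1 := IH isT.
  apply: (@eqN_trans N _ (('X^2 * qgen 1 N - 'X^3) * Dpoly ^+ 2) _).
    by rewrite exprS mulrA; apply: eqN_mulr; apply: G2.
  apply: (@eqN_trans N _ ('X^2 * ((2%:P - 'X) * 'X^(2 * 1) + (1 == 1)%N%:R *: ('X * Dpoly ^+ 2)) - 'X^3 * Dpoly ^+ 2) _).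
    rewrite mulrBl -mulrA; apply: eqN_add; apply: eqN_mull; apply: IH1.
  by apply: eqN_eq; rewrite /Dpoly scale1r scale0r; ring.
- have IH1 := IH isT.
  apply: (@eqN_trans N _ (('X^2 * qgen k.+2 N) * Dpoly ^+ k.+3) _).
    by rewrite exprS mulrA; apply: eqN_mulr; apply: (G3 N (k.+3)).
  apply: (@eqN_trans N _ ('X^2 * ((2%:P - 'X) * 'X^(2 * k.+2) + (k.+2 == 1)%N%:R *: ('X * Dpoly ^+ k.+3))) _).
    rewrite -mulrA; apply: eqN_mull; apply: IH1.
  apply: eqN_eq; rewrite !scale0r !addr0.
  rewrite mulrA [_ * (2%:P - _)]mulrC -mulrA -exprD.
  by congr (_ * 'X^_); lia.
Qed.
End Alg.

Unset Implicit Arguments.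

Theorem mainTheorem12 (k : nat) (hk : (1 <= k)%N) (N i : nat) (hi : (i <= N)%N) :
  (qgen k N * Dpoly ^+ k.+1)`_i =
  ((2%:P - 'X) * 'X^(2 * k) + (k == 1%N)%:R *: ('X * Dpoly ^+ k.+1))`_i.
Proof.
have H0 : forall k', q 0 k' = (k' == 0%N) by move=> k'; rewrite q_cnt cnt0.
have H1 : forall k', q 1 k' = match k' with 0 => 2 | 1 => 1 | _ => 0 end%N by move=> k'; rewrite q_cnt cnt1.
have H2 : forall k', q 2 k' = match k' with 0 => 3 | 1 => 2 | _ => 0 end%N by move=> k'; rewrite q_cnt cnt2.
have H3 : forall k', q 3 k' = match k' with 0 => 4 | 1 => 3 | _ => 0 end%N by move=> k'; rewrite q_cnt cnt3.
have H4 : forall m k', q m.+4 k' = (q m.+3 k' + q m.+2 k' + (if k' is k''.+1 then q m.+2 k'' else 0))%N.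
  by move=> m [|k']; rewrite !q_cnt cnt_rec.
exact: (mainAlg H0 H1 H2 H3 H4 k N hk i hi).
Qed.
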